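(* Let $k$ be a positive integer and let $G$ be a finite graph. If $G$ has a $k$-prime product distance labeling, then $G$ is $2^{k+1}$-colorable.
   Context: A $k$-prime product distance labeling of a graph $G$ is an injective map $L:V(G)\to\mathbb{Z}$ such that $|L(u)-L(v)|>1$ for all distinct vertices $u,v$ of $G$, and such that for every pair of adjacent vertices $u,v$ the integer $|L(u)-L(v)|$ has at most $k$ prime factors counted with multiplicity. A graph is $m$-colorable if its vertices can be colored with $m$ colors so that adjacent vertices receive different colors. *)

(* Defs.v *)
From mathcomp Require Import all_boot all_order all_algebra.
Set Implicit Arguments. Unset Strict Implicit. Unset Printing Implicit Defensive.
Import Order.TTheory GRing.Theory Num.Theory.

Definition simple_graph (T : finType) (e : rel T) : Prop :=
  symmetric e /\ irreflexive e.

Definition bigOmega (n : nat) : nat := \sum_(p <- primes n) logn p n.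

Definition kPPD_labeling (k : nat) (T : finType) (e : rel T) (L : T -> int) : Prop :=
  injective L /\
  (forall u v : T, u != v -> (1 < `|L u - L v|)%N) /\
  (forall u v : T, e u v -> (bigOmega `|L u - L v| <= k)%N).

Definition colorable (m : nat) (T : finType) (e : rel T) : Prop :=
  exists c : T -> 'I_m, forall u v : T, e u v -> c u != c v.

(* Main.v *)
Require Import Defs.
From mathcomp Require Import all_boot all_order all_algebra.
Import Order.TTheory GRing.Theory Num.Theory.

Lemma omega_ge k n : (0 < n)%N -> (2 ^ k %| n)%N -> (k <= bigOmega n)%N.
Proof.
move=> n0 dv; case: k dv => [|k] dv; first by [].
have h2 : (2 \in primes n).
  rewrite mem_primes /= n0 /=; apply: dvdn_trans dv; by rewrite expnS dvdn_mulr.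
rewrite /bigOmega (big_rem 2 h2) /=.
apply: leq_trans (leq_addr _ _).
by rewrite -pfactor_dvdn.
Qed.

Lemma mod_lt (x : int) (m : nat) : (0 < m)%N -> (`|(x %% m%:Z)%Z|%N < m)%N.
Proof.
move=> m0.
have mz : (m%:Z != 0)%R by rewrite eqz_nat -lt0n.
have h0 := modz_ge0 x mz.
have h1 : ((x %% m%:Z)%Z < m%:Z)%R by apply: ltz_pmod; rewrite ltz_nat.
rewrite -(gez0_abs h0) ltz_nat in h1; exact h1.
Qed.

Theorem mainTheorem1 (k : nat) (T : finType) (e : rel T) :
  (0 < k)%N -> simple_graph e ->
  (exists L : T -> int, kPPD_labeling k e L) ->
  colorable (2 ^ k.+1) e.
Proof.
move=> _ [_ irr] [L [inj [_ hom]]].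
have m0 : (0 < 2 ^ k.+1)%N by rewrite expn_gt0.
exists (fun u => Ordinal (@mod_lt (L u) _ m0)).
move=> u v euv; apply/negP => /eqP [] eq.
have mz : ((2 ^ k.+1)%:Z != 0)%R by rewrite eqz_nat -lt0n.
have hu := modz_ge0 (L u) mz; have hv := modz_ge0 (L v) mz.
have E : (L u %% (2 ^ k.+1)%:Z)%Z = (L v %% (2 ^ k.+1)%:Z)%Z.
  by rewrite -(gez0_abs hu) -(gez0_abs hv) eq.
have D : ((2 ^ k.+1)%:Z %| (L u - L v)%R)%Z by rewrite -eqz_mod_dvd; apply/eqP.
have neq : u != v by apply/eqP => uv; rewrite uv irr in euv.
have nz : (0 < `|(L u - L v)%R|)%N.
  rewrite absz_gt0 subr_eq0; apply/eqP => h; move/eqP: neq; apply; exact: inj.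
have := @omega_ge k.+1 _ nz D.
have := hom u v euv.
move=> a b; have := leq_trans b a; by rewrite ltnn.
Qed.
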